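(* For every $\varepsilon\in(0,3]$, the Truncated Harmonic rule $f^{TH}_\varepsilon$ has metric distortion at most $3+\varepsilon$, and its utilitarian distortion is $O(\sqrt m\,H_m/\varepsilon)$, i.e., there is an absolute constant $C$ such that for all $n,m$ and all $\varepsilon\in(0,3]$ its utilitarian distortion on instances with $m$ alternatives is at most $C\sqrt m\,H_m/\varepsilon$.
   Context: Setting: $n$ agents $\mathcal N$, $m$ alternatives $\mathcal A$; agent $i$ has a strict ranking, $r_i(Y)$ is the rank of $Y$ (1 = top), $X\succ_iY$ iff $r_i(X)<r_i(Y)$; $\mathrm{plu}(X,\vec\sigma)$ is the number of agents ranking $X$ first; $H_m=\sum_{k=1}^m1/k$. Metric framework: pseudometric $d$ on $\mathcal N\cup\mathcal A$, consistent with $\vec\sigma$ if $X\succ_iY\Rightarrow d(i,X)\le d(i,Y)$; $\mathrm{SC}(X,d)=\sum_id(i,X)$; metric distortion of a randomized rule $f$ is $\sup_{\vec\sigma}\sup_{d}\mathbb E_{X\sim f(\vec\sigma)}[\mathrm{SC}(X,d)]/\min_X\mathrm{SC}(X,d)$. Utilitarian framework: $u_i:\mathcal A\to\mathbb R_{\ge0}$, $\sum_Xu_i(X)=1$, consistent if $X\succ_iY\Rightarrow u_i(X)\ge u_i(Y)$; $\mathrm{SW}(X,\vec u)=\sum_iu_i(X)$; utilitarian distortion of $f$ is $\sup_{\vec\sigma}\sup_{\vec u}\max_X\mathrm{SW}(X,\vec u)/\mathbb E_{X\sim f(\vec\sigma)}[\mathrm{SW}(X,\vec u)]$. Plurality Veto: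 initialize $\mathrm{score}(X)=\mathrm{plu}(X,\vec\sigma)$; let $S$ be the alternatives with positive score; process agents in a fixed order, each decrementing the score of her lowest-ranked alternative in $S$, removing it from $S$ when its score hits $0$; output the last alternative removed. (It is known to have metric distortion $3$.) Truncated Harmonic rule $f^{TH}_\varepsilon$: let $\hat X$ be the output of Plurality Veto on $\vec\sigma$; pick an agent $i$ uniformly at random; output $Y$ with probability $p(i,Y)=\frac{\varepsilon}{6H_m r_i(Y)}$ if $Y\succ_i\hat X$, $p(i,\hat X)=1-\sum_{Y\succ_i\hat X}p(i,Y)$, and $p(i,Y)=0$ if $\hat X\succ_iY$. *)

(* Defs.v *)
From HB Require Import structures.
From mathcomp Require Import all_boot all_order all_algebra all_fingroup.
From mathcomp Require Import reals.
Set Implicit Arguments. Unset Strict Implicit. Unset Printing Implicit Defensive.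
Import Order.TTheory GRing.Theory Num.Theory.
Local Open Scope ring_scope.

(* A profile assigns to each agent a
   strict ranking, encoded as a permutation: (sigma i Y : nat) is the
   0-based position of Y in agent i's ranking, so r_i(Y) = (sigma i Y).+1. *)
Definition profile (n m : nat) := 'I_n -> {perm 'I_m}.

Section Voting.
Variables (n m : nat) (sigma : profile n m).

Definition rank (i : 'I_n) (Y : 'I_m) : nat := (sigma i Y).+1.

Definition prefers (i : 'I_n) (X Y : 'I_m) : bool := (rank i X < rank i Y)%N.

Definition plu (X : 'I_m) : nat := #|[set i | rank i X == 1%N]|.

Definition pv_step (st : {ffun 'I_m -> nat} * option 'I_m) (i : 'I_n)
  : {ffun 'I_m -> nat} * option 'I_m :=
  let: (sc, last) := st in
  match [pick Y | (0 < sc Y)%N &&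
                  [forall Z, (0 < sc Z)%N ==> (rank i Z <= rank i Y)%N]] with
  | Some Y => ([ffun Z => if Z == Y then (sc Z).-1 else sc Z],
               if sc Y == 1%N then Some Y else last)
  | None => (sc, last)
  end.

(* Plurality Veto, agents processed in the fixed order 0, 1, ..., n-1;
   returns the last alternative removed (None only in degenerate cases,
   e.g. n = 0). *)
Definition plurality_veto : option 'I_m :=
  (foldl pv_step ([ffun X => plu X], None) (enum 'I_n)).2.

Variable R : realType.

Definition harmonic (k : nat) : R := \sum_(j < k) (j.+1%:R)^-1.

Definition th_p (eps : R) (Xhat : 'I_m) (i : 'I_n) (Y : 'I_m) : R :=
  if prefers i Y Xhat then eps / (6 * harmonic m * (rank i Y)%:R)
  else if Y == Xhat then
    1 - \sum_(Z | prefers i Z Xhat) eps / (6 * harmonic m * (rank i Z)%:R)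
  else 0.

(* Output distribution of f^TH_eps: agent i uniform, then Y w.p. p(i,Y). *)
Definition th_dist (eps : R) (Y : 'I_m) : R :=
  match plurality_veto with
  | Some Xhat => \sum_(i < n) n%:R^-1 * th_p eps Xhat i Y
  | None => 0
  end.

(* Metric framework: pseudometric on N ∪ A, encoded on 'I_n + 'I_m *)
Definition pseudometric (d : 'I_n + 'I_m -> 'I_n + 'I_m -> R) : Prop :=
  [/\ forall x, d x x = 0,
      forall x y, 0 <= d x y,
      forall x y, d x y = d y x &
      forall x y z, d x z <= d x y + d y z].

Definition metric_consistent (d : 'I_n + 'I_m -> 'I_n + 'I_m -> R) : Prop :=
  forall i X Y, prefers i X Y -> d (inl i) (inr X) <= d (inl i) (inr Y).

Definition SC (d : 'I_n + 'I_m -> 'I_n + 'I_m -> R) (X : 'I_m) : R :=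
  \sum_(i < n) d (inl i) (inr X).

Definition utility_consistent (u : 'I_n -> 'I_m -> R) : Prop :=
  [/\ forall i X, 0 <= u i X,
      forall i, \sum_(X < m) u i X = 1 &
      forall i X Y, prefers i X Y -> u i Y <= u i X].

Definition SW (u : 'I_n -> 'I_m -> R) (X : 'I_m) : R := \sum_(i < n) u i X.

End Voting.

(* Main.v *)
Require Import Defs.
From HB Require Import structures.
From mathcomp Require Import all_boot all_order all_algebra all_fingroup.
From mathcomp Require Import reals.
From mathcomp Require Import ring lra zify.
Set Implicit Arguments. Unset Strict Implicit. Unset Printing Implicit Defensive.
Import Order.TTheory GRing.Theory Num.Theory.
Local Open Scope ring_scope.


Section PV.
Variables (n m : nat) (sigma : profile n m).

Lemma rank_inj i : injective (rank sigma i).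
Proof. move=> Y Z /eqP; rewrite /rank eqSS => /eqP H. apply: (perm_inj (s:=sigma i)). exact: val_inj. Qed.

Lemma pv_step_some (sc : {ffun 'I_m -> nat}) l i : (0 < \sum_Y sc Y)%N ->
  exists Y, [/\ (0 < sc Y)%N, forall Z, (0 < sc Z)%N -> (rank sigma i Z <= rank sigma i Y)%N &
   pv_step sigma (sc, l) i = ([ffun Z => if Z == Y then (sc Z).-1 else sc Z],
                             if sc Y == 1%N then Some Y else l)].
Proof.
move=> Hpos; rewrite /pv_step; case: pickP => [Y /andP[H1 /forallP H2]|Hn].
  by exists Y; split=> // Z HZ; exact: (implyP (H2 Z) HZ).
exfalso; case: (pickP (fun Z => 0 < sc Z)%N) => [Z0 HZ0|H0]; last first.
  move: Hpos; rewrite big1 // => Z _; by move: (H0 Z) => /negbT; rewrite lt0n negbK => /eqP.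
case: (@arg_maxnP _ Z0 (fun Z => 0 < sc Z)%N (fun Y => rank sigma i Y) HZ0) => Y HY Hmax.
move: (Hn Y); rewrite HY /=; move/negbT/negP; apply; apply/forallP => Z; apply/implyP => HZ.
exact: Hmax.
Qed.

Variable R : realType.

Lemma pv_main (s : seq 'I_n) (a : 'I_n -> 'I_m -> R) (b : 'I_m -> R) (c : 'I_n -> R) :
  (forall i Y Z, (rank sigma i Z <= rank sigma i Y)%N -> a i Z <= c i + b Y) ->
  (forall Y, 0 <= b Y) ->
  forall (sc : {ffun 'I_m -> nat}) l,
  (\sum_Y sc Y = size s)%N -> (0 < size s)%N ->
  exists Xh, (foldl (pv_step sigma) (sc, l) s).2 = Some Xh /\ (0 < sc Xh)%N /\
   \sum_(i <- s) a i Xh <= \sum_(i <- s) c i + \sum_Y (sc Y)%:R * b Y.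
Proof.
move=> Habc Hb; elim: s => [|i s IH] sc l Hsum Hs0; first by [].
have -> : foldl (pv_step sigma) (sc,l) (i::s) = foldl (pv_step sigma) (pv_step sigma (sc,l) i) s by [].
have [Y [HY Hw ->]] : _ := @pv_step_some sc l i (ltac:(by rewrite Hsum)).
set sc1 := [ffun Z => _].
have Hsplit : \sum_Y0 sc Y0 = (sc Y + \sum_(Y0 | Y0 != Y) sc Y0)%N by rewrite (bigD1 Y).
have Hsum1 : (\sum_Y0 sc1 Y0 = size s)%N.
  rewrite (bigD1 Y) //= ffunE eqxx.
  rewrite (eq_bigr (fun Y0 => sc Y0)); last by move=> Z /negbTE HZ; rewrite ffunE HZ.
  move: Hsum; rewrite Hsplit /= => Hs; lia.
have Hsplitr : \sum_Y0 (sc Y0)%:R * b Y0 = \sum_Y0 (sc1 Y0)%:R * b Y0 + b Y.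
  rewrite (bigD1 Y) //= [in RHS](bigD1 Y) //= ffunE eqxx.
  rewrite (eq_bigr (fun Y0 => (sc1 Y0)%:R * b Y0)); last by move=> Z /negbTE HZ; rewrite ffunE HZ.
  rewrite -{1}(prednK HY) -addn1 natrD mulrDl mul1r; lra.
clear Hs0; case: s IH Hsum Hsum1 => [|j s] IH Hsum Hsum1.
  have HY1 : sc Y = 1%N by move: Hsum; rewrite Hsplit /=; lia.
  exists Y; rewrite HY1 eqxx; split=> //; split=> //.
  rewrite !big_cons !big_nil !addr0 Hsplitr.
  have := Habc i Y Y (leqnn _).
  have : 0 <= \sum_Y0 (sc1 Y0)%:R * b Y0 by apply: sumr_ge0 => Z _; apply: mulr_ge0.
  lra.
have [Xh [H1 [H2 H3]]] := IH sc1 (if sc Y == 1%N then Some Y else l) Hsum1 isT.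
exists Xh; split=> //.
have HXh : (0 < sc Xh)%N.
  move: H2; rewrite ffunE; case: eqP => [->|] //; lia.
split=> //.
rewrite big_cons [X in _ <= X + _]big_cons Hsplitr.
have := Habc i Y Xh (Hw _ HXh).
lra.
Qed.

End PV.



Section PV2.
Variables (n m : nat) (sigma : profile n m).

Lemma rank_top (j : 'I_n) (k0 : 'I_m) : val k0 = 0%N ->
  forall Y, (rank sigma j Y == 1%N) = (Y == (sigma j)^-1%g k0).
Proof.
move=> Hk Y; rewrite /rank eqSS.
apply/eqP/eqP => [H|->]; last by rewrite permKV Hk.
by rewrite -(permK (sigma j) Y); congr (_ _); apply: val_inj; rewrite /= H Hk.
Qed.

Lemma plu_sum : (0 < m)%N -> (\sum_Y plu sigma Y = n)%N.
Proof.
move=> Hm; pose k0 : 'I_m := Ordinal Hm.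
rewrite /plu (eq_bigr (fun Y => \sum_(j | rank sigma j Y == 1%N) 1%N)); last first.
  by move=> Y _; rewrite -sum1_card; apply: eq_bigl => j; rewrite inE.
rewrite (exchange_big_dep xpredT) //=.
rewrite (eq_bigr (fun _ => 1%N)) ?sum1_card ?card_ord //.
move=> j _; rewrite (eq_bigl (fun Y => Y == (sigma j)^-1%g k0)); first by rewrite big_pred1_eq.
by move=> Y; rewrite (@rank_top j k0 erefl).
Qed.

Variable R : realType.

Lemma pv_exists : (0 < n)%N -> (0 < m)%N -> exists Xh, plurality_veto sigma = Some Xh.
Proof.
move=> Hn Hm.
have Hs : (\sum_Y [ffun X => plu sigma X] Y = size (enum 'I_n))%N.
  rewrite size_enum_ord -{2}(plu_sum Hm); apply: eq_bigr => Y _; by rewrite ffunE.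
have Hz : (0 < size (enum 'I_n))%N by rewrite size_enum_ord.
have [Xh [H _]] := @pv_main n m sigma R (enum 'I_n) (fun _ _ => 0) (fun _ => 0) (fun _ => 0) (fun _ _ _ _ => ltac:(by rewrite addr0)) (fun _ => lexx 0) [ffun X => plu sigma X] None Hs Hz.
by exists Xh.
Qed.

Lemma pv_metric (d : 'I_n + 'I_m -> 'I_n + 'I_m -> R) :
  (0 < n)%N -> (0 < m)%N -> pseudometric d -> metric_consistent sigma d ->
  forall Xh X, plurality_veto sigma = Some Xh -> SC d Xh <= 3 * SC d X.
Proof.
move=> Hn Hm [d0 dpos dsym dtri] Hcons Xh X HXh.
have Hle : forall i Y Z, (rank sigma i Z <= rank sigma i Y)%N -> d (inl i) (inr Z) <= d (inl i) (inr Y).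
  move=> i Y Z; rewrite leq_eqVlt => /orP[/eqP H|H].
    by rewrite (rank_inj H) lexx.
  exact: Hcons.
have Hs : (\sum_Y [ffun X => plu sigma X] Y = size (enum 'I_n))%N.
  rewrite size_enum_ord -{2}(plu_sum Hm); apply: eq_bigr => Y _; by rewrite ffunE.
have Hz : (0 < size (enum 'I_n))%N by rewrite size_enum_ord.
have Habc : forall i Y Z, (rank sigma i Z <= rank sigma i Y)%N -> d (inl i) (inr Z) <= d (inl i) (inr X) + d (inr X) (inr Y).
  move=> i Y Z HZ; apply: le_trans (Hle _ _ _ HZ) _; exact: dtri.
have [Xh' [H1 [_ H3]]] := @pv_main n m sigma R (enum 'I_n) (fun i Z => d (inl i) (inr Z))
   (fun Y => d (inr X) (inr Y)) (fun i => d (inl i) (inr X)) Habc (fun Y => dpos _ _) [ffun X => plu sigma X] None Hs Hz.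
move: HXh; rewrite /plurality_veto H1 => -[<-].
move: H3; rewrite !big_enum /=.
pose k0 : 'I_m := Ordinal Hm.
have -> : \sum_Y ([ffun X0 => plu sigma X0] Y)%:R * d (inr X) (inr Y) =
   \sum_j d (inr X) (inr ((sigma j)^-1%g k0)).
  rewrite (eq_bigr (fun Y => \sum_(j | rank sigma j Y == 1%N) d (inr X) (inr Y))); last first.
    move=> Y _; rewrite ffunE /plu sumr_const mulr_natl; congr (_ *+ _).
    by apply: eq_card => j; rewrite inE.
  rewrite (exchange_big_dep xpredT) //=.
  apply: eq_bigr => j _; rewrite (eq_bigl (fun Y => Y == (sigma j)^-1%g k0)); first by rewrite big_pred1_eq.
  by move=> Y; rewrite (@rank_top j k0 erefl).
have Htop : forall j, d (inr X) (inr ((sigma j)^-1%g k0)) <= 2 * d (inl j) (inr X).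
  move=> j; set T := (sigma j)^-1%g k0.
  have HT : d (inl j) (inr T) <= d (inl j) (inr X).
    apply: Hle; have : rank sigma j T = 1%N by apply/eqP; rewrite (@rank_top j k0 erefl).
    by move=> ->; rewrite /rank.
  have := dtri (inr X) (inl j) (inr T); rewrite (dsym (inr X) (inl j)); lra.
have Hs2 : \sum_j d (inr X) (inr ((sigma j)^-1%g k0)) <= \sum_j 2 * d (inl j) (inr X).
  by apply: ler_sum => j _; exact: Htop.
rewrite -mulr_sumr in Hs2.
rewrite /SC; lra.
Qed.

End PV2.



Section TH.
Variables (n m : nat) (sigma : profile n m) (R : realType) (eps : R) (Xh : 'I_m).
Hypotheses (Hm : (0 < m)%N) (He : 0 < eps) (He3 : eps <= 3).
Local Notation h := (harmonic R m).
Local Notation pr i Y := (eps / (6 * harmonic R m * (rank sigma i Y)%:R)).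

Lemma h_ge1 : 1 <= h.
Proof.
rewrite /harmonic; case: m Hm => // m' _; rewrite big_ord_recl /= invr1.
have : 0 <= \sum_(i < m') ((bump 0 i).+1%:R)^-1 :> R.
  by apply: sumr_ge0 => i _; rewrite invr_ge0 ler0n.
lra.
Qed.

Lemma rank_gt0 i Y : 0 < (rank sigma i Y)%:R :> R.
Proof. by rewrite ltr0n /rank. Qed.

Lemma pr_ge0 i Y : 0 <= pr i Y.
Proof.
have := h_ge1; have := rank_gt0 i Y => H1 H2.
apply: divr_ge0; first exact: ltW.
apply: mulr_ge0; last exact: ltW.
lra.
Qed.

Lemma pr_eq i Y : pr i Y = eps / (6 * h) * ((rank sigma i Y)%:R)^-1.
Proof. by rewrite invfM mulrA. Qed.

Lemma sum_inv_rank i : \sum_Y ((rank sigma i Y)%:R)^-1 = h :> R.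
Proof.
rewrite /harmonic [in RHS](reindex_inj (@perm_inj _ (sigma i))) /=.
by apply: eq_bigr.
Qed.

Lemma sum_pref_ge0 i : 0 <= \sum_(Z | prefers sigma i Z Xh) pr i Z.
Proof. by apply: sumr_ge0 => Z _; exact: pr_ge0. Qed.

Lemma sum_pref_le i : \sum_(Z | prefers sigma i Z Xh) pr i Z <= eps / 6.
Proof.
have Hh := h_ge1.
under eq_bigr do rewrite pr_eq.
rewrite -mulr_sumr.
have HS : \sum_(Z | prefers sigma i Z Xh) ((rank sigma i Z)%:R)^-1 <= h.
  rewrite -(sum_inv_rank i) [X in _ <= X](bigID (fun Z => prefers sigma i Z Xh)) /=.
  have : 0 <= \sum_(Z | ~~ prefers sigma i Z Xh) ((rank sigma i Z)%:R)^-1 :> R.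
    by apply: sumr_ge0 => Z _; rewrite invr_ge0 ltW // rank_gt0.
  lra.
have -> : eps / 6 = eps / (6 * h) * h by field; lra.
apply: ler_wpM2l => //.
apply: divr_ge0; [exact: ltW | lra].
Qed.

Lemma th_sum i (g : 'I_m -> R) :
  \sum_Y th_p sigma eps Xh i Y * g Y =
  g Xh + \sum_(Y | prefers sigma i Y Xh) pr i Y * (g Y - g Xh).
Proof.
rewrite (bigID (fun Y => prefers sigma i Y Xh)) /=.
rewrite (eq_bigr (fun Y => pr i Y * g Y)); last by move=> Y HY; rewrite /th_p HY.
have Hx : ~~ prefers sigma i Xh Xh by rewrite /prefers ltnn.
rewrite (bigD1 Xh Hx) /=.
rewrite [X in _ + (_ + X) = _]big1 ?addr0; last first.
  by move=> Y /andP[/negbTE H1 /negbTE H2]; rewrite /th_p H1 H2 mul0r.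
rewrite /th_p (negbTE Hx) eqxx.
under [X in _ = _ + X]eq_bigr do rewrite mulrBr.
rewrite sumrB mulrBl mul1r mulr_suml.
lra.
Qed.

Lemma th_p_ge0 i Y : 0 <= th_p sigma eps Xh i Y.
Proof.
rewrite /th_p; case: ifP => _; first exact: pr_ge0.
case: ifP => _ //; rewrite subr_ge0; apply: le_trans (sum_pref_le i) _; have := He3; lra.
Qed.

Lemma th_p_Xh i : 1 / 2 <= th_p sigma eps Xh i Xh.
Proof.
rewrite /th_p /prefers ltnn eqxx /= -/(prefers sigma i).
have := sum_pref_le i; have := He3; lra.
Qed.

End TH.



Lemma metric_part (R : realType) (n m : nat) (eps : R) : (0 < n)%N -> (0 < m)%N ->
     0 < eps -> eps <= 3 ->
     forall (sigma : profile n m) (d : 'I_n + 'I_m -> 'I_n + 'I_m -> R),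
       pseudometric d -> metric_consistent sigma d ->
       forall X : 'I_m,
         \sum_(Y < m) th_dist sigma eps Y * SC d Y <= (3 + eps) * SC d X.
Proof.
move=> Hn Hm He He3 sigma d Hd Hc X.
have HSC : forall Y, 0 <= SC d Y.
  by move=> Y; apply: sumr_ge0 => j _; case: Hd.
case Hpv: (plurality_veto sigma) => [Xh|]; last first.
  rewrite /th_dist Hpv big1; last by move=> Y _; rewrite mul0r.
  by apply: mulr_ge0; [have := He; lra | exact: HSC].
have H3 := pv_metric Hn Hm Hd Hc X Hpv.
case: Hd => d0 dpos dsym dtri.
rewrite /th_dist Hpv.
under eq_bigr do rewrite mulr_suml.
rewrite exchange_big /=.
under eq_bigr do (under eq_bigr do rewrite -mulrA; rewrite -mulr_sumr th_sum).
have Hn' : 0 < n%:R :> R by rewrite ltr0n.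
have Hdiff : forall i Y, prefers sigma i Y Xh -> SC d Y - SC d Xh <= n%:R * (2 * d (inl i) (inr Xh)).
  move=> i Y HY.
  have HXY : d (inr Xh) (inr Y) <= 2 * d (inl i) (inr Xh).
    have := dtri (inr Xh) (inl i) (inr Y); rewrite (dsym (inr Xh) (inl i)).
    have := Hc i Y Xh HY; lra.
  rewrite /SC -sumrB.
  have Hc2 : \sum_(j < n) d (inr Xh) (inr Y) <= n%:R * (2 * d (inl i) (inr Xh)).
    rewrite sumr_const card_ord -[X in X <= _]mulr_natl; apply: ler_wpM2l => //; exact: ler0n.
  apply: le_trans Hc2; apply: ler_sum => j _.
  have := dtri (inl j) (inr Xh) (inr Y); lra.
have Hterm : forall i, n%:R^-1 * (SC d Xh + \sum_(Y | prefers sigma i Y Xh)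
     eps / (6 * harmonic R m * (rank sigma i Y)%:R) * (SC d Y - SC d Xh))
     <= n%:R^-1 * SC d Xh + eps / 3 * d (inl i) (inr Xh).
  move=> i.
  have Hs : \sum_(Y | prefers sigma i Y Xh)
     eps / (6 * harmonic R m * (rank sigma i Y)%:R) * (SC d Y - SC d Xh)
     <= (\sum_(Y | prefers sigma i Y Xh) eps / (6 * harmonic R m * (rank sigma i Y)%:R))
        * (n%:R * (2 * d (inl i) (inr Xh))).
    rewrite mulr_suml; apply: ler_sum => Y HY.
    apply: ler_wpM2l; first exact: pr_ge0.
    exact: Hdiff.
  have Hq := sum_pref_le sigma Xh Hm He i.
  have Hq0 := sum_pref_ge0 sigma Xh Hm He i.
  have Hdi := dpos (inl i) (inr Xh).
  set q := (\sum_(Y | prefers sigma i Y Xh) eps / (6 * harmonic R m * (rank sigma i Y)%:R)) in Hs Hq Hq0 *.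
  have Hq2 : q * (n%:R * (2 * d (inl i) (inr Xh))) <= eps / 6 * (n%:R * (2 * d (inl i) (inr Xh))).
    have Hnn : 0 <= n%:R * (2 * d (inl i) (inr Xh)) by apply: mulr_ge0; [exact: ler0n | lra].
    exact: (ler_wpM2r Hnn Hq).
  have -> : eps / 3 * d (inl i) (inr Xh) = n%:R^-1 * (eps / 6 * (n%:R * (2 * d (inl i) (inr Xh)))).
    field; by rewrite lt0r_neq0.
  rewrite -mulrDr; apply: ler_wpM2l; first by rewrite invr_ge0 ltW.
  lra.
apply: le_trans (ler_sum _ (fun i _ => Hterm i)) _.
rewrite big_split /= sumr_const card_ord -mulr_sumr.
have -> : n%:R^-1 * SC d Xh *+ n = SC d Xh.
  by rewrite -mulr_natl mulrA mulfV ?mul1r // lt0r_neq0.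
rewrite -/(SC d Xh).
have := HSC Xh; have := HSC X; have := He; have := He3.
nra.
Qed.



Lemma final_alg (R : realType) (E N M k a S Q sw sx s : R) :
 0 < N -> 1 <= M -> 0 < k -> k <= 1/2 -> sw <= 2 * E -> k * Q <= N * E -> a^+2 <= Q ->
 S^+2 <= M * Q -> N <= S + M * sw -> 0 <= a -> 0 <= S -> 0 <= sw -> 0 <= E ->
 sx <= a + sw -> 0 <= s -> s^+2 = M -> k * sx <= 3 * s * E.
Proof.
move=> HN HM Hk Hk2 Hsw HQ HaQ HSQ HNS Ha HS Hsw0 HE Hsx Hs HsM.
have H1 : k * N <= 4 * M * E.
  case: (lerP (N/2) S) => HS2.
    have HNN : N * N <= 4 * (M * Q) by nra.
    have HkNN : k * (N * N) <= 4 * M * (N * E).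
      have : k * (M * Q) <= M * (N * E) by nra.
      nra.
    nra.
  have : M * sw <= M * (2 * E) by nra.
  nra.
have H2 : (k * a)^+2 <= (2 * s * E)^+2.
  have Ha2 : k^+2 * a^+2 <= k^+2 * Q by nra.
  have : k * (k * Q) <= k * (N * E) by nra.
  have : (k * N) * E <= (4 * M * E) * E by nra.
  rewrite !exprMn HsM. nra.
have H3 : k * a <= 2 * s * E.
  have : 0 <= 2 * s * E by nra.
  have : 0 <= k * a by nra.
  nra.
have Hs1 : 1 <= s by nra.
nra.
Qed.



Lemma card_le_rank n m (sigma : profile n m) i Y :
  #|[pred Z | (sigma i Z <= sigma i Y)%N]| = rank sigma i Y.
Proof.
rewrite -sum1_card (reindex_inj (@perm_inj _ ((sigma i)^-1)%g)) /=.
rewrite (eq_bigl (fun k : 'I_m => (k < (sigma i Y).+1)%N)); last first.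
  by move=> k; rewrite inE permKV ltnS.
rewrite -(big_ord_widen _ (fun _ => 1%N)) ?ltn_ord //.
by rewrite sum1_card card_ord.
Qed.

Lemma u_rank n m (sigma : profile n m) (R : realType) (u : 'I_n -> 'I_m -> R) :
  utility_consistent sigma u -> forall i Y, u i Y * (rank sigma i Y)%:R <= 1.
Proof.
case=> u0 us um i Y.
apply: le_trans (_ : _ <= \sum_(Z | (sigma i Z <= sigma i Y)%N) u i Z) _; last first.
  rewrite -(us i) [X in _ <= X](bigID (fun Z => (sigma i Z <= sigma i Y)%N)) /=.
  by rewrite lerDl; apply: sumr_ge0 => Z _.
rewrite -card_le_rank -sum1_card natr_sum mulr_sumr.
apply: ler_sum => Z HZ; rewrite mulr1.
move: HZ; rewrite inE leq_eqVlt => /orP[/eqP H|H].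
  by have -> : Z = Y by apply: (@perm_inj _ (sigma i)); apply: val_inj.
by apply: um; rewrite /prefers /rank ltnS.
Qed.

Lemma util_part (R : realType) : exists C : R, forall (n m : nat) (eps : R), (0 < n)%N -> (0 < m)%N ->
     0 < eps -> eps <= 3 ->
     forall (sigma : profile n m) (u : 'I_n -> 'I_m -> R),
       utility_consistent sigma u ->
       forall X : 'I_m,
         SW u X <= C * Num.sqrt (m%:R) * harmonic R m / eps *
                   \sum_(Y < m) th_dist sigma eps Y * SW u Y.
Proof.
exists 18; move=> n m eps Hn Hm He He3 sigma u Hu X.
have [Xh Hpv] := pv_exists sigma R Hn Hm.
have Hur := u_rank Hu.
case: (Hu) => u0 us um.
pose th := fun Y => \sum_(i < n) n%:R^-1 * th_p sigma eps Xh i Y.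
rewrite (eq_bigr (fun Y => th Y * SW u Y)); last by move=> Y _; rewrite /th_dist Hpv.
set E := \sum_Y th Y * SW u Y.
have Hh := h_ge1 R Hm.
set h := harmonic R m in Hh *.
set k := eps / (6 * h).
have Hn' : 0 < n%:R :> R by rewrite ltr0n.
have Hm' : 1 <= m%:R :> R by rewrite ler1n.
have Hkpos : 0 < k by rewrite /k; apply: divr_gt0 => //; lra.
have Hk6 : k * (6 * h) = eps by rewrite /k; field; lra.
have Hk2 : k <= 1/2 by nra.
have Hth0 : forall Y, 0 <= th Y.
  move=> Y; apply: sumr_ge0 => i _; apply: mulr_ge0; first by rewrite invr_ge0 ltW.
  exact: th_p_ge0.
have HthX : 1/2 <= th Xh.
  apply: le_trans (_ : \sum_(i < n) n%:R^-1 * (1/2) <= _).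
    rewrite sumr_const card_ord -(mulr_natl (n%:R^-1 * (1/2)) n); rewrite mulrA mulfV ?mul1r //; by rewrite lt0r_neq0.
  apply: ler_sum => i _; apply: ler_wpM2l; first by rewrite invr_ge0 ltW.
  exact: th_p_Xh.
have HSW0 : forall Y, 0 <= SW u Y by move=> Y; apply: sumr_ge0.
pose A := fun Y => \sum_(i | prefers sigma i Y Xh) u i Y.
have HA0 : forall Y, 0 <= A Y by move=> Y; apply: sumr_ge0.
have HSWA : forall Y, SW u Y <= A Y + SW u Xh.
  move=> Y; rewrite /SW (bigID (fun i => prefers sigma i Y Xh)) /= lerD2l.
  apply: le_trans (_ : _ <= \sum_(i | ~~ prefers sigma i Y Xh) u i Xh) _.
    apply: ler_sum => i Hi.
    move: Hi; rewrite /prefers -leqNgt leq_eqVlt => /orP[/eqP H|H].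
      by rewrite (rank_inj H).
    exact: um.
  rewrite [X in _ <= X](bigID (fun i => prefers sigma i Y Xh)) /= lerDr.
  by apply: sumr_ge0.
have HASW : forall Y, A Y <= SW u Y.
  move=> Y; rewrite /SW [X in _ <= X](bigID (fun i => prefers sigma i Y Xh)) /= lerDl.
  by apply: sumr_ge0.
have Hthk : forall Y, k * n%:R^-1 * A Y <= th Y.
  move=> Y; rewrite /th (bigID (fun i => prefers sigma i Y Xh)) /=.
  apply: le_trans (_ : _ <= \sum_(i | prefers sigma i Y Xh) n%:R^-1 * th_p sigma eps Xh i Y) _; last first.
    rewrite lerDl; apply: sumr_ge0 => i _; apply: mulr_ge0; first by rewrite invr_ge0 ltW.
    exact: th_p_ge0.
  rewrite /A mulr_sumr; apply: ler_sum => i Hi.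
  rewrite /th_p Hi pr_eq -/h -/k (mulrC k) -mulrA; apply: ler_wpM2l; first by rewrite invr_ge0 ltW.
  apply: ler_wpM2l; first exact: ltW.
  have := Hur i Y; have := rank_gt0 sigma R i Y => Hr.
  by rewrite -ler_pdivlMr // mul1r.
have HE1 : th Xh * SW u Xh <= E.
  rewrite /E (bigD1 Xh) //= lerDl; apply: sumr_ge0 => Y _; exact: mulr_ge0.
pose Q := \sum_Y A Y ^+ 2.
have HE2 : k * n%:R^-1 * Q <= E.
  rewrite /Q mulr_sumr; apply: ler_sum => Y _.
  rewrite expr2 mulrA; apply: ler_pM => //.
  by apply: mulr_ge0 => //; apply: mulr_ge0; [exact: ltW | rewrite invr_ge0 ltW].
have HkQ : k * Q <= n%:R * E.
  have -> : k * Q = n%:R * (k * n%:R^-1 * Q) by field; rewrite lt0r_neq0.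
  by apply: ler_wpM2l => //; exact: ltW.
have HQa : A X ^+ 2 <= Q.
  rewrite /Q (bigD1 X) //= lerDl; apply: sumr_ge0 => Y _; exact: sqr_ge0.
pose S := \sum_Y A Y.
have HS0 : 0 <= S by apply: sumr_ge0.
have HSQ : S ^+ 2 <= m%:R * Q.
  have H0 : 0 <= \sum_Y (m%:R * A Y - S) ^+ 2 by apply: sumr_ge0 => Y _; exact: sqr_ge0.
  have Heq : \sum_Y (m%:R * A Y - S) ^+ 2 = m%:R ^+ 2 * Q - 2 * m%:R * S * S + S ^+ 2 * m%:R.
    rewrite (eq_bigr (fun Y => (m%:R ^+ 2 * A Y ^+ 2 - 2 * m%:R * S * A Y) + S ^+ 2)); last by move=> Y _; ring.
    rewrite big_split sumrB /= -!mulr_sumr sumr_const card_ord -/Q -/S.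
    ring.
  rewrite Heq in H0.
  nra.
have HNS : n%:R <= S + m%:R * SW u Xh.
  have -> : n%:R = \sum_Y SW u Y :> R.
    rewrite /SW exchange_big /= (eq_bigr (fun _ => 1)); last by move=> i _; exact: us.
    by rewrite sumr_const card_ord.
  apply: le_trans (ler_sum _ (fun Y _ => HSWA Y)) _.
  by rewrite big_split /= sumr_const card_ord mulr_natl.
have HswE : SW u Xh <= 2 * E.
  have := HSW0 Xh; nra.
have Hs0 := sqrtr_ge0 (m%:R : R).
have HsM : Num.sqrt (m%:R : R) ^+ 2 = m%:R by rewrite sqr_sqrtr // ler0n.
have HE0 : 0 <= E by apply: sumr_ge0 => Y _; exact: mulr_ge0.
have Hfin := final_alg Hn' Hm' Hkpos Hk2 HswE HkQ HQa HSQ HNS (HA0 X) HS0 (HSW0 Xh)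
  HE0 (HSWA X) Hs0 HsM.
have -> : 18 * Num.sqrt (m%:R : R) * h / eps * E = (3 * Num.sqrt (m%:R : R) * E) / k.
  rewrite /k; field; apply/andP; split; apply: lt0r_neq0; lra.
by rewrite ler_pdivlMr // mulrC.
Qed.


Theorem mainTheorem7 (R : realType) :
  (* metric distortion at most 3 + eps *)
  (forall (n m : nat) (eps : R), (0 < n)%N -> (0 < m)%N ->
     0 < eps -> eps <= 3 ->
     forall (sigma : profile n m) (d : 'I_n + 'I_m -> 'I_n + 'I_m -> R),
       pseudometric d -> metric_consistent sigma d ->
       forall X : 'I_m,
         \sum_(Y < m) th_dist sigma eps Y * SC d Y <= (3 + eps) * SC d X)
  /\
  (* utilitarian distortion O(sqrt m * H_m / eps) *)
  (exists C : R, forall (n m : nat) (eps : R), (0 < n)%N -> (0 < m)%N ->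
     0 < eps -> eps <= 3 ->
     forall (sigma : profile n m) (u : 'I_n -> 'I_m -> R),
       utility_consistent sigma u ->
       forall X : 'I_m,
         SW u X <= C * Num.sqrt (m%:R) * harmonic R m / eps *
                   \sum_(Y < m) th_dist sigma eps Y * SW u Y).
Proof.
split; [exact: (@metric_part R) | exact: util_part].
Qed.
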